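(* Let $n,k$ be integers with $2\le k<n$. Then $$\overline{\mathrm{dist}}_F(\mathcal{S}^{n,k},\mathcal{S}^n_+)\ge \frac{n-k}{\sqrt{(k-1)^2 n+n(n-1)}}.$$
   Context: $\mathcal{S}^n_+$ denotes the cone of $n\times n$ real symmetric positive semidefinite (PSD) matrices. For integers $2\le k\le n$, the $k$-PSD closure $\mathcal{S}^{n,k}$ is the set of all $n\times n$ real symmetric matrices all of whose $k\times k$ principal submatrices are PSD. For a matrix $M$, $\mathrm{dist}_F(M,\mathcal{S}^n_+)=\inf_{N\in\mathcal{S}^n_+}\|M-N\|_F$, where $\|\cdot\|_F$ is the Frobenius norm. For a set $\mathcal{K}$ of $n\times n$ matrices, $\overline{\mathrm{dist}}_F(\mathcal{K},\mathcal{S}^n_+)=\sup_{M\in\mathcal{K},\ \|M\|_F=1}\mathrm{dist}_F(M,\mathcal{S}^n_+)$. *)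

(* Defs.v *)
From HB Require Import structures.
From mathcomp Require Import all_boot all_order all_algebra.
From mathcomp Require Import all_classical all_reals.
Set Implicit Arguments. Unset Strict Implicit. Unset Printing Implicit Defensive.
Import Order.TTheory GRing.Theory Num.Theory.
Local Open Scope ring_scope.
Local Open Scope classical_set_scope.

Section Defs.
Variable R : realType.

Definition symmetric_mx (n : nat) (M : 'M[R]_n) : Prop := M^T = M.

Definition psd (n : nat) (M : 'M[R]_n) : Prop :=
  symmetric_mx M /\ forall x : 'cV[R]_n, 0 <= (x^T *m M *m x) 0 0.

Definition psd_cone (n : nat) : set 'M[R]_n := [set M | psd M].

(* principal submatrix indexed by the subset S (rows/cols in increasing order) *)
Definition principal_submx (n : nat) (S : {set 'I_n}) (M : 'M[R]_n)
  : 'M[R]_#|S| := \matrix_(i, j) M (enum_val i) (enum_val j).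

Definition kpsd_closure (n k : nat) : set 'M[R]_n :=
  [set M | symmetric_mx M /\
     forall S : {set 'I_n}, #|S| = k -> psd (principal_submx S M)].

Definition frob (n : nat) (M : 'M[R]_n) : R :=
  Num.sqrt (\sum_i \sum_j M i j ^+ 2).

Definition dist_psd (n : nat) (M : 'M[R]_n) : R :=
  inf [set frob (M - N) | N in @psd_cone n].

Definition dist_bar (n : nat) (K : set 'M[R]_n) : R :=
  sup [set dist_psd M | M in K `&` [set M | frob M = 1]].

End Defs.

(* Main.v *)
Require Import Defs.
From mathcomp Require Import all_boot all_order all_algebra.
From mathcomp Require Import all_classical all_reals.
From mathcomp Require Import ring lra.
Import Order.TTheory GRing.Theory Num.Theory.
Local Open Scope ring_scope.

Section H.
Variable R : realType.

Lemma sum_delta (T : finType) (i : T) (F : T -> R) :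
  \sum_j (i == j)%:R * F j = F i.
Proof.
rewrite (bigD1 i) //= eqxx mul1r big1 ?addr0 // => j /negPf.
by rewrite eq_sym => ->; rewrite mul0r.
Qed.

Lemma cs_sum (T : finType) (f : T -> R) :
  (\sum_i f i) ^+ 2 <= #|T|%:R * \sum_i f i ^+ 2.
Proof.
have H : 0 <= \sum_i \sum_j (f i - f j) ^+ 2.
  by apply: sumr_ge0 => i _; apply: sumr_ge0 => j _; apply: sqr_ge0.
have E : \sum_i \sum_j (f i - f j) ^+ 2 =
   2%:R * (#|T|%:R * \sum_i f i ^+ 2) - 2%:R * (\sum_i f i) ^+ 2.
  under eq_bigr do under eq_bigr do rewrite sqrrB.
  under eq_bigr do rewrite !big_split /= sumrN.
  rewrite !big_split /= !sumrN.
  have e1 : \sum_i \sum_(j : T) f i ^+ 2 = #|T|%:R * \sum_i f i ^+ 2.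
    under eq_bigr do rewrite sumr_const.
    by rewrite sumrMnl mulr_natl.
  have e2 : \sum_(i : T) \sum_j f j ^+ 2 = #|T|%:R * \sum_i f i ^+ 2.
    by rewrite sumr_const mulr_natl.
  have e3 : \sum_i \sum_j f i * f j *+ 2 = 2%:R * (\sum_i f i) ^+ 2.
    under eq_bigr do rewrite sumrMnl.
    rewrite sumrMnl mulr_natl expr2 mulr_suml; congr (_ *+ _).
    by apply: eq_bigr => i _; rewrite mulr_sumr.
  rewrite e1 e2 e3; ring.
nra.
Qed.

Lemma qform (m : nat) (A : 'M[R]_m) (x : 'cV[R]_m) :
  (x^T *m A *m x) 0 0 = \sum_i \sum_j x i 0 * A i j * x j 0.
Proof.
rewrite mxE exchange_big /=; apply: eq_bigr => j _.
rewrite mxE mulr_suml; apply: eq_bigr => i _.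
by rewrite !mxE.
Qed.
End H.
Section H2.
Variable R : realType.

Lemma psd0 m : psd (0 : 'M[R]_m).
Proof.
split; first by rewrite /symmetric_mx trmx0.
by move=> x; rewrite mulmx0 mul0mx mxE.
Qed.

Lemma psd_kIJ m (d : R) : 0 <= d ->
  psd (\matrix_(i, j) (((i == j :> 'I_m)%:R * m%:R - 1) * d)).
Proof.
move=> d0; split.
  by apply/matrixP => i j; rewrite !mxE eq_sym.
move=> x; rewrite qform.
have -> : \sum_i \sum_j x i 0 * (\matrix_(i, j) (((i == j :> 'I_m)%:R * m%:R - 1) * d)) i j * x j 0
   = d * (m%:R * \sum_i x i 0 ^+ 2 - (\sum_i x i 0) ^+ 2).
  transitivity (\sum_i \sum_j (d * ((i == j)%:R * (m%:R * (x i 0 * x j 0))) - d * (x i 0 * x j 0))).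
    apply: eq_bigr => i _; apply: eq_bigr => j _; rewrite mxE; ring.
  under eq_bigr do rewrite sumrB -mulr_sumr sum_delta.
  rewrite sumrB mulrBr; congr (_ - _).
    by rewrite !mulr_sumr; apply: eq_bigr => i _; rewrite expr2.
  rewrite expr2 mulr_suml mulr_sumr; apply: eq_bigr => i _.
  by rewrite !mulr_sumr.
apply: mulr_ge0 => //; rewrite subr_ge0.
by have := @cs_sum R _ (fun i : 'I_m => x i 0); rewrite card_ord.
Qed.

End H2.
Section H3.
Variable R : realType.

Lemma frob_lb m (D : 'M[R]_m) (v : R) : (0 < m)%N -> 0 <= v ->
  m%:R * v <= `|\sum_i \sum_j D i j| -> v <= frob D.
Proof.
move=> m0 v0 H.
have cs : (\sum_i \sum_j D i j) ^+ 2 <= (m%:R ^+ 2) * \sum_i \sum_j D i j ^+ 2.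
  rewrite !pair_bigA /=.
  have := @cs_sum R _ (fun p : 'I_m * 'I_m => D p.1 p.2).
  by rewrite card_prod card_ord natrM expr2.
have mp : 0 < m%:R :> R by rewrite ltr0n.
have h2 : (m%:R * v) ^+ 2 <= (\sum_i \sum_j D i j) ^+ 2.
  rewrite -(real_normK (num_real (\sum_i \sum_j D i j))).
  have a0 : 0 <= m%:R * v by rewrite mulr_ge0 ?ler0n.
  by rewrite !expr2; apply: ler_pM.
have Q0 : 0 <= \sum_i \sum_j D i j ^+ 2.
  by apply: sumr_ge0 => i _; apply: sumr_ge0 => j _; apply: sqr_ge0.
have h3 : v ^+ 2 <= \sum_i \sum_j D i j ^+ 2.
  have h4 := le_trans h2 cs.
  rewrite exprMn in h4.
  by rewrite -(ler_pM2l (exprn_gt0 2 mp)).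
rewrite /frob -(ger0_norm v0) -sqrtr_sqr ler_sqrt //.
Qed.

End H3.

Theorem theorem3 (R : realType) (n k : nat) (hk2 : (2 <= k)%N) (hkn : (k < n)%N) :
  (n - k)%:R / Num.sqrt (((k - 1) ^ 2 * n + n * (n - 1))%:R)
    <= dist_bar (@kpsd_closure R n k).
Proof.
have k1 : (1 <= k)%N by apply: ltnW.
have n1 : (1 <= n)%N by apply: leq_trans k1 (ltnW hkn).
set kk : R := k%:R; set nn : R := n%:R.
pose B : 'M[R]_n := \matrix_(i, j) ((i == j)%:R * kk - 1).
pose S := \sum_i \sum_j B i j ^+ 2.
have SE : S = ((k - 1) ^ 2 * n + n * (n - 1))%:R.
  rewrite natrD !natrM !natrB // -/kk -/nn.
  rewrite /S.
  transitivity (\sum_(i : 'I_n) (kk ^+ 2 - 2%:R * kk + nn)).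
    apply: eq_bigr => i _.
    transitivity (\sum_j ((i == j)%:R * (kk ^+ 2 - 2%:R * kk) + 1)).
      apply: eq_bigr => j _; rewrite mxE; case: (i == j); rewrite /=; ring.
    by rewrite big_split /= sum_delta sumr_const card_ord -/nn mulr_natr.
  rewrite sumr_const card_ord -mulr_natr -/nn; ring.
have Spos : 0 < S.
  rewrite SE ltr0n addn_gt0; apply/orP; right; rewrite muln_gt0 n1 /=.
  by rewrite subn_gt0; apply: ltn_trans hk2 hkn.
set c := Num.sqrt S.
have cpos : 0 < c by rewrite sqrtr_gt0.
have c2 : c ^+ 2 = S by rewrite sqr_sqrtr // ltW.
pose A : 'M[R]_n := \matrix_(i, j) (((i == j)%:R * kk - 1) * c^-1).
have Ak : @kpsd_closure R n k A.
  split; first by apply/matrixP => i j; rewrite !mxE eq_sym.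
  move=> T HT.
  have -> : principal_submx T A =
      \matrix_(i, j) (((i == j :> 'I_#|T|)%:R * #|T|%:R - 1) * c^-1).
    apply/matrixP => i j; have -> : #|T|%:R = kk :> R by rewrite HT.
    by rewrite !mxE (inj_eq enum_val_inj).
  by apply: psd_kIJ; rewrite invr_ge0 ltW.
have A1 : frob A = 1.
  rewrite /frob -sqrtr1; congr (Num.sqrt _).
  transitivity (S / c ^+ 2); last by rewrite c2 divff // gt_eqF.
  rewrite /S mulr_suml; apply: eq_bigr => i _; rewrite mulr_suml.
  by apply: eq_bigr => j _; rewrite !mxE exprMn exprVn.
have sumA : \sum_i \sum_j A i j = - (nn * (nn - kk)) / c.
  transitivity (\sum_(i : 'I_n) ((kk - nn) * c^-1)).
    apply: eq_bigr => i _.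
    transitivity (\sum_j ((i == j)%:R * (kk * c^-1) - c^-1)).
      by apply: eq_bigr => j _; rewrite mxE; ring.
    by rewrite sumrB sum_delta sumr_const card_ord -/nn mulr_natl; ring.
  rewrite sumr_const card_ord -mulr_natl -/nn; ring.
have dA : (n - k)%:R / c <= dist_psd A.
  apply: lb_le_inf.
    by exists (frob (A - 0)); exists 0 => //; apply: psd0.
  move=> _ [N PN <-].
  apply: frob_lb => //.
    by rewrite divr_ge0 ?ler0n ?ltW.
  have sN : 0 <= \sum_i \sum_j N i j.
    have := PN.2 (const_mx 1); rewrite qform.
    congr (_ <= _); apply: eq_bigr => i _; apply: eq_bigr => j _.
    by rewrite !mxE mul1r mulr1.
  have -> : \sum_i \sum_j (A - N) i j = \sum_i \sum_j A i j - \sum_i \sum_j N i j.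
    rewrite -sumrB; apply: eq_bigr => i _; rewrite -sumrB.
    by apply: eq_bigr => j _; rewrite !mxE.
  rewrite sumA natrB ?(ltnW hkn) // -/nn -/kk.
  have hc : 0 <= nn * (nn - kk) / c.
    apply: divr_ge0; last exact: ltW.
    by apply: mulr_ge0; rewrite ?ler0n // subr_ge0 ler_nat ltnW.
  rewrite ler0_norm; last by rewrite mulNr; lra.
  rewrite mulrA mulNr; lra.
have ub : has_ubound [set dist_psd M | M in @kpsd_closure R n k `&` [set M | frob M = 1]].
  exists 1 => _ [M [_ HM] <-].
  have lb : has_lbound [set frob (M - N) | N in @psd_cone R n].
    by exists 0 => _ [N _ <-]; apply: sqrtr_ge0.
  rewrite /dist_psd; apply: le_trans (_ : _ <= frob (M - 0)) _; last by rewrite subr0 HM.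
  apply: ge_inf => //; exists 0 => //; exact: psd0.
have hA : dist_psd A <= dist_bar (@kpsd_closure R n k).
  by apply: (ub_le_sup ub); exists A.
by apply: le_trans hA; rewrite -SE.
Qed.
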